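(* Let $I, J$ be completely regular Hausdorff spaces, $X, Y$ Hausdorff locally convex topological vector spaces over $\mathbb{C}$, with $X\otimes Y$ given a locally convex Hausdorff topology for which $(x,y)\mapsto x\otimes y$ is continuous. Let $V$, $W$, $U$ be Nachbin families on $I$, $J$, $I \times J$ respectively. Suppose (i) for all $(t, s) \in I \times J$, $\overline{CV_0(I, X)(t) \otimes CW_0(J, Y)(s)} = \overline{CU_{0}(I \times J, X \otimes Y)(t, s)}$, and (ii) $CV_{0}(I, X) \otimes CW_{0}(J, Y) \subset CU_{0}(I \times J, X \otimes Y)$. Then $CU_{0}(I \times J, X \otimes Y)$ is the closure of $CV_{0}(I, X) \otimes CW_{0}(J, Y)$ in the topology of $CU_{0}(I \times J, X \otimes Y)$.
   Context: A Nachbin family on $\Omega$ is a set $V$ of upper semicontinuous functions $\Omega\to\mathbb{R}_+$ such that for $v_1,v_2\in V$ there are $\lambda\ge0$, $w\in V$ with $v_1,v_2\le\lambda w$, and for each $x$ some $v\in V$ has $v(x)>0$. For a locally convex space $Z$ with seminorms $\mathfrak{A}$, $g:\Omega\to Z$ vanishes at infinity if for each $p\in\mathfrak{A}$, $\epsilon>0$ the closure of $\{x:p(g(x))\ge\epsilon\}$ is compact; $CV_0(\Omega,Z)=\{f\in C(\Omega,Z):vf\text{ vanishes at infinity }\forall v\in V\}$, topologized by seminorms $f\mapsto\sup_x v(x)p(f(x))$. For a set $\mathcal{W}$ of functions, $\mathcal{W}(s)=\{f(s):f\in\mathcal{W}\}$. For $f:I\to X$, $g:J\to Y$, $(f\otimes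 g)(t,s)=f(t)\otimes g(s)$, and $\mathcal{W}\otimes\mathcal{V}=\mathrm{span}\{f\otimes g\}$; for subsets $X_1\subset X$, $Y_1\subset Y$, $X_1\otimes Y_1=\mathrm{span}\{x\otimes y:x\in X_1,y\in Y_1\}$. *)

(* Defs.v *)
From HB Require Import structures.
From mathcomp Require Import all_boot all_order all_algebra.
From mathcomp Require Import all_classical all_reals all_analysis.
From mathcomp Require Export complex.
Export Order.TTheory GRing.Theory Num.Theory.

Set Implicit Arguments.
Unset Strict Implicit.
Unset Printing Implicit Defensive.

Local Open Scope classical_set_scope.
Local Open Scope ring_scope.

Definition is_seminorm (R : realType) (X : lmodType R[i]) (p : X -> R) : Prop :=
  (forall x y, p (x + y) <= p x + p y) /\
  (forall (a : R[i]) x, p (a *: x) = ComplexField.Normc.normc a * p x).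

(* A locally convex topology on X, given by a family of seminorms (p i)_i *)
Definition lc_family (R : realType) (X : lmodType R[i]) (idx : Type)
  (p : idx -> X -> R) : Prop := forall i, is_seminorm (p i).

Definition lc_hausdorff (R : realType) (X : lmodType R[i]) (idx : Type)
  (p : idx -> X -> R) : Prop := forall x, (forall i, p i x = 0) -> x = 0.

(* Closure of A in the (locally convex) topology generated by the seminorms
   p i, i ranging over the admissible indices P: z is in the closure of A iff
   every basic neighbourhood {y | p i_1 (y - z) < e, ..., p i_n (y - z) < e}
   of z meets A. *)
Definition lc_closure (R : realType) (T : zmodType) (idx : Type)
  (P : set idx) (p : idx -> T -> R) (A : set T) : set T :=
  fun z => forall (n : nat) (k : 'I_n -> idx), (forall j, P (k j)) ->
    forall e : R, 0 < e ->
      exists2 a, A a & forall j, p (k j) (z - a) < e.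

Definition lc_continuous (R : realType) (O : topologicalType) (X : zmodType)
  (idx : Type) (p : idx -> X -> R) (f : O -> X) : Prop :=
  forall (x : O) (i : idx) (e : R), 0 < e ->
    \forall y \near x, p i (f y - f x) < e.

Definition bilinear_map (R : realType) (X Y Z : lmodType R[i])
  (b : X -> Y -> Z) : Prop :=
  (forall y, linear (fun x => b x y)) /\ (forall x, linear (b x)).

Definition is_tensor_product (R : realType) (X Y Z : lmodType R[i])
  (tens : X -> Y -> Z) : Prop :=
  bilinear_map tens /\
  forall (W : lmodType R[i]) (B : X -> Y -> W), bilinear_map B ->
    exists L : Z -> W, [/\ linear L, (forall x y, L (tens x y) = B x y) &
      forall L' : Z -> W, linear L' -> (forall x y, L' (tens x y) = B x y) ->
        L' = L].

Definition tensor_continuous (R : realType) (X Y Z : lmodType R[i])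
  (iX iY iZ : Type) (pX : iX -> X -> R) (pY : iY -> Y -> R)
  (pZ : iZ -> Z -> R) (tens : X -> Y -> Z) : Prop :=
  forall (x0 : X) (y0 : Y) (r : iZ) (e : R), 0 < e ->
    exists (n m : nat) (a : 'I_n -> iX) (b : 'I_m -> iY) (d : R), 0 < d /\
      forall x y, (forall j, pX (a j) (x - x0) < d) ->
                  (forall j, pY (b j) (y - y0) < d) ->
                  pZ r (tens x y - tens x0 y0) < e.

Definition tensor_span (R : realType) (X Y Z : lmodType R[i])
  (tens : X -> Y -> Z) (X1 : set X) (Y1 : set Y) : set Z :=
  fun z => exists (n : nat) (c : 'I_n -> R[i]) (x : 'I_n -> X) (y : 'I_n -> Y),
    (forall k, X1 (x k) /\ Y1 (y k)) /\ z = \sum_(k < n) c k *: tens (x k) (y k).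

Definition fun_tensor_span (R : realType) (I J : Type) (X Y Z : lmodType R[i])
  (tens : X -> Y -> Z) (F : set (I -> X)) (G : set (J -> Y)) : set (I * J -> Z) :=
  fun h => exists (n : nat) (c : 'I_n -> R[i]) (f : 'I_n -> I -> X)
      (g : 'I_n -> J -> Y),
    (forall k, F (f k) /\ G (g k)) /\
    h = (fun ts => \sum_(k < n) c k *: tens (f k ts.1) (g k ts.2)).

Definition evals (S T : Type) (W : set (S -> T)) (s : S) : set T :=
  [set f s | f in W].

Definition upper_semicont (R : realType) (O : topologicalType) (v : O -> R) :=
  forall (x : O) (e : R), 0 < e -> \forall y \near x, v y < v x + e.

Definition nachbin_family (R : realType) (O : topologicalType)
  (V : set (O -> R)) : Prop :=
  [/\ (forall v, V v -> upper_semicont v /\ forall x, 0 <= v x),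
      (forall v1 v2, V v1 -> V v2 -> exists (l : R) (w : O -> R),
         [/\ 0 <= l, V w & forall x, v1 x <= l * w x /\ v2 x <= l * w x]) &
      (forall x, exists2 v, V v & 0 < v x)].

Definition vanishes_at_infinity (R : realType) (O : topologicalType)
  (Z : zmodType) (idx : Type) (p : idx -> Z -> R) (g : O -> Z) : Prop :=
  forall (i : idx) (e : R), 0 < e -> compact (closure [set x | e <= p i (g x)]).

Definition CV0 (R : realType) (O : topologicalType) (Z : lmodType R[i])
  (idx : Type) (p : idx -> Z -> R) (V : set (O -> R)) : set (O -> Z) :=
  fun f => lc_continuous p f /\
    forall v, V v -> vanishes_at_infinity p (fun x => real_complex R (v x) *: f x).

Definition weighted_sup (R : realType) (O : Type) (Z : zmodType)
  (v : O -> R) (q : Z -> R) (f : O -> Z) : R :=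
  sup [set v x * q (f x) | x in [set: O]].

Definition CV0_seminorm (R : realType) (O : Type) (Z : zmodType) (idx : Type)
  (p : idx -> Z -> R) (vi : (O -> R) * idx) (f : O -> Z) : R :=
  weighted_sup vi.1 (p vi.2) f.

Definition CV0_index (R : realType) (O : Type) (idx : Type)
  (V : set (O -> R)) : set ((O -> R) * idx) := fun vi => V vi.1.

(* Main.v *)
Require Import Defs.
From HB Require Import structures.
From mathcomp Require Import all_boot all_order all_algebra.
From mathcomp Require Import all_classical all_reals all_analysis.
From mathcomp Require Import complex.
From mathcomp.algebra_tactics Require Import ring lra.
Import Order.TTheory GRing.Theory Num.Theory.
Import numFieldNormedType.Exports.
Local Open Scope classical_set_scope.
Local Open Scope ring_scope.

Section Sn.
Context {R : realType} {X : lmodType R[i]} {p : X -> R}.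
Hypothesis hp : is_seminorm p.

Lemma normc_real (r : R) : ComplexField.Normc.normc (real_complex R r) = `|r|.
Proof. by rewrite /= expr0n /= addr0 sqrtr_sqr. Qed.

Lemma snZ (r : R) x : p (real_complex R r *: x) = `|r| * p x.
Proof. by rewrite hp.2 normc_real. Qed.

Lemma snZp (r : R) x : 0 <= r -> p (real_complex R r *: x) = r * p x.
Proof. by move=> r0; rewrite snZ ger0_norm. Qed.

Lemma sn0 : p 0 = 0.
Proof. by rewrite -(scale0r 0) -[0 : R[i]]/(real_complex R 0) snZ normr0 mul0r. Qed.

Lemma snN x : p (- x) = p x.
Proof.
by rewrite -scaleN1r -(rmorphN1 (real_complex R)) snZ normrN normr1 mul1r.
Qed.

Lemma snD x y : p (x + y) <= p x + p y.
Proof. exact: hp.1. Qed.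

Lemma sn_ge0 x : 0 <= p x.
Proof.
have := snD x (- x); rewrite subrr sn0 snN => H.
by rewrite -(@pmulr_rge0 _ 2) // mulr2n mulrDl mul1r.
Qed.

Lemma snB x y : p x - p y <= p (x - y).
Proof. by rewrite lerBlDr; have := snD (x - y) y; rewrite subrK. Qed.

Lemma snBn x y : `|p x - p y| <= p (x - y).
Proof.
rewrite ler_norml snB andbT lerNl opprB -(snN (x - y)) opprB; exact: snB.
Qed.

Lemma snT x y z : p (x - z) <= p (x - y) + p (y - z).
Proof. by apply: le_trans (snD _ _); rewrite addrA subrK. Qed.

Lemma sn_sum (T : Type) (s : seq T) (F : T -> X) :
  p (\sum_(i <- s) F i) <= \sum_(i <- s) p (F i).
Proof.
elim: s => [|a s IH]; first by rewrite !big_nil sn0.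
rewrite !big_cons; apply: le_trans (snD _ _) _; exact: lerD.
Qed.
End Sn.

Lemma fincover (T : topologicalType) (K : set T) (O : T -> set T) :
  compact K -> (forall x, K x -> nbhs x (O x)) ->
  exists s : seq T, (forall y, y \in s -> K y) /\
    (forall x, K x -> exists2 y, y \in s & O y x).
Proof.
move=> /compact_near_coveringP cK hO.
pose F : set_system (seq T) :=
  [set S | exists s0 : seq T, forall s : seq T, {subset s0 <= s} -> S s].
have FF : Filter F.
  constructor.
  - by exists [::].
  - move=> P Q [s0 H0] [s1 H1]; exists (s0 ++ s1) => s sub; split.
      by apply: H0 => y ys; apply: sub; rewrite mem_cat ys.
    by apply: H1 => y ys; apply: sub; rewrite mem_cat ys orbT.
  - by move=> P Q PQ [s0 H0]; exists s0 => s /H0 /PQ.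
pose P (s : seq T) (x : T) := exists2 y, (y \in s) && `[< K y >] & O y x.
have := cK _ F P FF.
case.
- move=> x Kx; exists (O x, [set s : seq T | x \in s]) => /=.
    split; first exact: hO.
    by exists [:: x] => s; apply; rewrite inE.
  case=> x' s /= [Ox' xs]; exists x => //; rewrite xs /=; exact/asboolP.
move=> s0 H0; have H1 := H0 s0 (fun _ h => h).
exists [seq y <- s0 | `[< K y >]]; split.
  by move=> y; rewrite mem_filter => /andP[/asboolP].
move=> x Kx; have [y /andP[ys Ky] Oy] := H1 x Kx.
by exists y => //; rewrite mem_filter Ky.
Qed.

Lemma bump (R : realType) (T : topologicalType) (y : T) (A : set T) :
  completely_regular_space T -> nbhs y A ->
  exists g : T -> R, [/\ continuous g, (forall x, 0 <= g x <= 1), g y = 1 &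
     forall x, 0 < g x -> A x].
Proof.
move=> crs nA.
have clB : closed (~` A°) by apply: open_closedC; exact: open_interior.
have nBy : ~ (~` A°) y by move=> /(_ nA).
have [f [fc fr f0 f1]] := (uniform_separatorP (R := R) _ _).1 (crs _ _ clB nBy).
exists (fun x => 1 - f x); split.
- by move=> x; apply: cvgB; [exact: cvg_cst | exact: fc].
- move=> x; have := fr (f x) (ex_intro2 _ _ x I erefl).
  by rewrite set_itvE /= => /andP[h0 h1]; rewrite subr_ge0 h1 lerBlDr lerDl h0.

- have fy : f y = 0 by apply: f0; exists y.
  by rewrite /= fy subr0.
- move=> x; rewrite subr_gt0 => fx1; apply: interior_subset.
  apply: contrapT => nAx.
  have : f x = 1 by apply: f1; exists x.
  by move=> h; rewrite h ltxx in fx1.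
Qed.

Lemma sum_ge_term (R : realType) (T : eqType) (s : seq T) (F : T -> R) y :
  y \in s -> (forall z, 0 <= F z) -> F y <= \sum_(z <- s) F z.
Proof.
move=> ys F0; elim: s ys => [|a s IH] //; rewrite inE big_cons => /orP[/eqP <-|/IH h].
  by rewrite lerDl sumr_ge0.
by apply: le_trans h _; rewrite lerDr.
Qed.

Lemma pou (R : realType) (T : topologicalType) (K : set T) (P : T -> set T) :
  completely_regular_space T -> compact K ->
  (forall x, K x -> nbhs x (P x)) ->
  exists (s : seq T) (phi : T -> T -> R),
  [/\ (forall y, continuous (phi y) /\ forall x, 0 <= phi y x),
     (forall y x, y \in s -> phi y x <= 1),
     (forall x, \sum_(y <- s) phi y x <= 1),
     (forall x, K x -> \sum_(y <- s) phi y x = 1) &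
     (forall y x, y \in s -> 0 < phi y x -> P y x)].
Proof.
move=> crs cK nP.
have : forall y, exists g : T -> R, [/\ continuous g, (forall x, 0 <= g x <= 1) &
   (K y -> g y = 1 /\ forall x, 0 < g x -> P y x)].
  move=> y; case: (pselect (K y)) => Ky.
    have [g [gc gr gy gP]] := @bump R T y _ crs (nP y Ky).
    by exists g; split.
  exists (fun _ => 0); split => //; first by move=> x; exact: cvg_cst.
  by move=> x; rewrite lexx ler01.
case/choice => g hg.
have [s [sK scov]] : exists s : seq T, (forall y, y \in s -> K y) /\
    (forall x, K x -> exists2 y, y \in s & 2^-1 < g y x).
  apply: (@fincover T K (fun y => [set x | 2^-1 < g y x]) cK) => x Kx.
  have [gc _ /(_ Kx) [gx _]] := hg x.
  have h : 2^-1 < g x x by rewrite gx invf_lt1 // ltr1n.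
  exact: (cvgr_gt _ (gc x) _ h).
pose G x := \sum_(y <- s) g y x.
pose M x := Num.max (G x) 2^-1.
have M0 x : 0 < M x by rewrite /M lt_max invr_gt0 ltr0n orbT.
have gc y : continuous (g y) by have [] := hg y.
have g01 y x : 0 <= g y x <= 1 by have [_ +] := hg y.
have g0 y x : 0 <= g y x by have /andP[] := g01 y x.
have Gc : forall s', continuous (fun x => \sum_(y <- s') g y x).
  elim=> [|a s' IH].
    have -> : (fun x => \sum_(y <- [::]) g y x) = fun=> 0.
      by apply/funext => x; rewrite big_nil.
    by move=> x; exact: cvg_cst.
  have -> : (fun x => \sum_(y <- a :: s') g y x) = fun x => g a x + \sum_(y <- s') g y x.
    by apply/funext => x; rewrite big_cons.
  by move=> x; apply: cvgD; [exact: gc | exact: IH].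
have Mc : continuous M.
  move=> x; apply: (@continuous_max R T G (fun=> 2^-1) x); first exact: Gc.
  exact: cvg_cst.
have GM x : G x <= M x by rewrite /M le_max lexx.
exists s, (fun y x => g y x / M x); split.
- move=> y; split.
    move=> x; apply: cvgM; first exact: gc.
    by apply: cvgV; [exact: lt0r_neq0 | exact: Mc].
  by move=> x; rewrite divr_ge0 // ltW.
- move=> y x ys; rewrite ler_pdivrMr // mul1r; apply: le_trans (GM x).
  exact: sum_ge_term.
- move=> x; rewrite -mulr_suml ler_pdivrMr // mul1r; exact: GM.
- move=> x Kx; rewrite -mulr_suml; have [y ys hy] := scov x Kx.
  have E : M x = G x.
    by rewrite /M max_l //; apply: le_trans (ltW hy) _; exact: sum_ge_term.
  by rewrite -[\sum_(y <- s) g y x]/(G x) -E divff // lt0r_neq0.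
- move=> y x ys; rewrite pmulr_lgt0 ?invr_gt0 // => gp.
  by have [_ _ /(_ (sK y ys)) [_]] := hg y; apply.
Qed.


Lemma lin_scale (R : realType) (A B : lmodType R[i]) (f : A -> B) :
  linear f -> forall (a : R[i]) x, f (a *: x) = a *: f x.
Proof.
move=> lf a x.
have f0 : f 0 = 0.
  have := lf 1 0 0; rewrite !scale1r addr0 => /esym/eqP.
  by rewrite -subr_eq0 addrK => /eqP.
by have := lf a x 0; rewrite !addr0 f0 addr0.
Qed.
Arguments lin_scale {R A B f}.

Section Scale.
Variables (R : realType) (O : topologicalType) (X : lmodType R[i]) (idx : Type)
  (p : idx -> X -> R).
Hypothesis hp : lc_family p.
Variable phi : O -> R.
Hypothesis phic : continuous phi.
Hypothesis phi01 : forall x, 0 <= phi x <= 1.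

Lemma lc_cont_scale (f : O -> X) : lc_continuous p f ->
  lc_continuous p (fun x => real_complex R (phi x) *: f x).
Proof.
move=> fc x i e e0.
have hq := hp i.
set a := p i (f x).
have a0 : 0 < a + 1 by rewrite ltr_wpDl // sn_ge0.
have h1 : \forall y \near x, `|phi x - phi y| < e / 2 / (a + 1).
  by move: (phic x) => /cvgrPdist_lt; apply; rewrite !divr_gt0.
have m0 : 0 < Num.min 1 (e / 2) by rewrite lt_min ltr01 divr_gt0.
have h2 := fc x i _ m0.
move: h1 h2; apply: filterS2 => y H1 H2.
have E : real_complex R (phi y) *: f y - real_complex R (phi x) *: f x =
  real_complex R (phi y - phi x) *: f y + real_complex R (phi x) *: (f y - f x).
  by rewrite rmorphB scalerBl scalerBr addrA subrK.
rewrite E; apply: le_lt_trans (snD hq _ _) _.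
have px0 : 0 <= phi x by have /andP[] := phi01 x.
rewrite (snZ hq) (snZp hq _ _ px0).
rewrite lt_min in H2; case/andP: H2 => H21 H22.
have fy : p i (f y) <= a + 1.
  by rewrite -lerBlDl; apply: le_trans (snB hq _ _) (ltW H21).
rewrite [e]splitr; apply: ltrD.
  apply: (@le_lt_trans _ _ (`|phi y - phi x| * (a + 1))).
    by apply: ler_wpM2l.
  by rewrite -ltr_pdivlMr // distrC.
apply: le_lt_trans H22; rewrite ler_piMl ?sn_ge0 //; by have /andP[] := phi01 x.
Qed.

Lemma vanish_scale (v : O -> R) (f : O -> X) :
  vanishes_at_infinity p (fun x => real_complex R (v x) *: f x) ->
  vanishes_at_infinity p
    (fun x => real_complex R (v x) *: (real_complex R (phi x) *: f x)).
Proof.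
move=> hv i e e0; apply: (subclosed_compact _ (hv i e e0)).
  exact: closed_closure.
apply: closureS => x /=.
have px0 : 0 <= phi x by have /andP[] := phi01 x.
rewrite scalerA mulrC -scalerA (snZp (hp i) _ _ px0).
move=> h; apply: le_trans h _; rewrite ler_piMl ?sn_ge0 //.
by have /andP[] := phi01 x.
Qed.

Lemma CV0_scale (V : set (O -> R)) (f : O -> X) : CV0 p V f ->
  CV0 p V (fun x => real_complex R (phi x) *: f x).
Proof.
case=> fc fv; split; first exact: lc_cont_scale.
by move=> v Vv; apply: vanish_scale; apply: fv.
Qed.
End Scale.

Definition sel (T : Type) m n (a : 'I_m -> T) (b : 'I_n -> T) (k : 'I_(m + n)) : T :=
  match fintype.split k with inl i => a i | inr j => b j end.
Arguments sel {T m n} a b k.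

Lemma sel_l T m n (a : 'I_m -> T) (b : 'I_n -> T) i : sel a b (lshift n i) = a i.
Proof. by rewrite /sel (unsplitK (inl i)). Qed.

Lemma sel_r T m n (a : 'I_m -> T) (b : 'I_n -> T) j : sel a b (rshift m j) = b j.
Proof. by rewrite /sel (unsplitK (inr j)). Qed.

Section Span.
Variables (R : realType) (I J : Type) (X Y Z : lmodType R[i]) (tens : X -> Y -> Z).
Variables (F : set (I -> X)) (G : set (J -> Y)).
Local Notation span := (fun_tensor_span tens F G).

Lemma span0 : span (fun _ => 0).
Proof.
exists 0, (fun _ => 0), (fun _ _ => 0), (fun _ _ => 0); split; first by case.
by apply/funext => ts; rewrite big_ord0.
Qed.

Lemma spanD h1 h2 : span h1 -> span h2 -> span (fun ts => h1 ts + h2 ts).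
Proof.
case=> [n1 [c1 [f1 [g1 [H1 ->]]]]] [n2 [c2 [f2 [g2 [H2 ->]]]]].
exists (n1 + n2), (sel c1 c2), (sel f1 f2), (sel g1 g2); split.
  by move=> k; rewrite /sel; case: (fintype.split k).
apply/funext => ts; rewrite big_split_ord /=.
by congr (_ + _); apply: eq_bigr => i _; rewrite ?sel_l ?sel_r.
Qed.

Lemma span_sum (T : eqType) (s : seq T) (H : T -> I * J -> Z) :
  (forall q, q \in s -> span (H q)) ->
  span (fun ts => \sum_(q <- s) H q ts).
Proof.
elim: s => [|a s IH] hs.
  have -> : (fun ts => \sum_(q <- [::]) H q ts) = fun _ => 0.
    by apply/funext => ts; rewrite big_nil.
  exact: span0.
have -> : (fun ts => \sum_(q <- a :: s) H q ts) =
    fun ts => H a ts + \sum_(q <- s) H q ts.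
  by apply/funext => ts; rewrite big_cons.
apply: spanD; first by apply: hs; rewrite inE eqxx.
by apply: IH => q qs; apply: hs; rewrite inE qs orbT.
Qed.

Hypothesis btens : bilinear_map tens.

Lemma spanZ (phi : I -> R) (psi : J -> R) h :
  (forall f, F f -> F (fun x => real_complex R (phi x) *: f x)) ->
  (forall g, G g -> G (fun y => real_complex R (psi y) *: g y)) ->
  span h -> span (fun ts => real_complex R (phi ts.1 * psi ts.2) *: h ts).
Proof.
move=> hF hG [n [c [f [g [H ->]]]]].
exists n, c, (fun k x => real_complex R (phi x) *: f k x),
  (fun k y => real_complex R (psi y) *: g k y); split.
  by move=> k; have [Hf Hg] := H k; split; [apply: hF | apply: hG].
apply/funext => ts; rewrite scaler_sumr; apply: eq_bigr => k _.
rewrite (lin_scale (btens.1 _)) (lin_scale (btens.2 _)) !scalerA.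
by congr (_ *: _); rewrite rmorphM mulrC mulrA.
Qed.
End Span.

Lemma nbhs_seqI (T : topologicalType) (A : eqType) (t : T) (s : seq A)
  (Q : A -> set T) : (forall a, a \in s -> nbhs t (Q a)) ->
  nbhs t [set x | forall a, a \in s -> Q a x].
Proof.
elim: s => [|b s IH] h.
  by apply: filterS filterT => x _ a.
have hb : nbhs t (Q b) by apply: h; rewrite inE eqxx.
have hs : nbhs t [set x | forall a, a \in s -> Q a x].
  by apply: IH => a as_; apply: h; rewrite inE as_ orbT.
apply: filterS2 hb hs => x qb qs a; rewrite inE => /orP[/eqP ->//|].
exact: qs.
Qed.

Lemma mem_bigU (T : Type) (A : eqType) (s : seq A) (K : A -> set T) x :
  (\big[setU/set0]_(a <- s) K a) x <-> exists2 a, a \in s & K a x.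
Proof.
elim: s => [|b s IH]; first by rewrite big_nil; split => // -[].
rewrite big_cons; split.
  case=> [h|/IH [a as_ h]]; first by exists b; rewrite ?inE ?eqxx.
  by exists a; rewrite // inE as_ orbT.
case=> a; rewrite inE => /orP[/eqP -> h|as_ h]; first by left.
by right; apply/IH; exists a.
Qed.

Lemma compact_bigU (T : topologicalType) (A : Type) (s : seq A) (K : A -> set T) :
  (forall a, compact (K a)) -> compact (\big[setU/set0]_(a <- s) K a).
Proof.
move=> hK; elim: s => [|b s IH]; first by rewrite big_nil; exact: compact0.
by rewrite big_cons; apply: compactU.
Qed.

Lemma approx_bound (R : realType) (Z : lmodType R[i]) (p : Z -> R)
  (hp : is_seminorm p) (T : eqType) (s : seq T) (rho : T -> R) (H : T -> Z)
  (f : Z) (u c : R) :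
  0 <= u -> (forall q, 0 <= rho q) -> \sum_(q <- s) rho q <= 1 ->
  (forall q, q \in s -> 0 < rho q -> u * p (f - H q) <= c) ->
  u * p (f - \sum_(q <- s) real_complex R (rho q) *: H q) <=
  (1 - \sum_(q <- s) rho q) * (u * p f) + (\sum_(q <- s) rho q) * c.
Proof.
move=> u0 r0 S1 hq.
set S := \sum_(q <- s) rho q.
have E : f - \sum_(q <- s) real_complex R (rho q) *: H q =
  real_complex R (1 - S) *: f +
  \sum_(q <- s) real_complex R (rho q) *: (f - H q).
  rewrite rmorphB rmorph1 scalerBl scale1r.
  rewrite [X in _ = _ + X](eq_bigr (fun q => real_complex R (rho q) *: f -
                             real_complex R (rho q) *: H q)); last first.
    by move=> q _; rewrite scalerBr.
  rewrite sumrB -scaler_suml -rmorph_sum -/S.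
  by rewrite addrA subrK.
rewrite E.
have S0 : 0 <= 1 - S by rewrite subr_ge0.
apply: (@le_trans _ _ (u * ((1 - S) * p f +
    \sum_(q <- s) rho q * p (f - H q)))).
  apply: ler_wpM2l => //; apply: le_trans (snD hp _ _) _.
  rewrite (snZp hp _ _ S0) lerD2l.
  apply: le_trans (sn_sum hp _ _ _) _.
  by apply: ler_sum => q _; rewrite (snZp hp _ _ (r0 q)).
rewrite mulrDr mulrCA lerD2l mulr_sumr /S mulr_suml.
rewrite big_seq_cond [X in _ <= X]big_seq_cond.
apply: ler_sum => q /andP[qs _].
rewrite mulrCA.
have [rq0|rq0] := eqVneq (rho q) 0; first by rewrite rq0 !mul0r.
have rqp : 0 < rho q by rewrite lt_def rq0 r0.
by apply: ler_wpM2l => //; apply: hq.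
Qed.

Theorem theorem3p24 (R : realType) (I J : topologicalType)
  (X Y Z : lmodType R[i]) (iX iY iZ : Type)
  (pX : iX -> X -> R) (pY : iY -> Y -> R) (pZ : iZ -> Z -> R)
  (tens : X -> Y -> Z)
  (V : set (I -> R)) (W : set (J -> R)) (U : set (I * J -> R)) :
  hausdorff_space I -> completely_regular_space I ->
  hausdorff_space J -> completely_regular_space J ->
  lc_family pX -> lc_hausdorff pX ->
  lc_family pY -> lc_hausdorff pY ->
  is_tensor_product tens ->
  lc_family pZ -> lc_hausdorff pZ ->
  tensor_continuous pX pY pZ tens ->
  nachbin_family V -> nachbin_family W -> nachbin_family U ->
  (forall (t : I) (s : J),
     lc_closure setT pZ
       (tensor_span tens (evals (CV0 pX V) t) (evals (CV0 pY W) s)) =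
     lc_closure setT pZ (evals (CV0 pZ U) (t, s))) ->
  fun_tensor_span tens (CV0 pX V) (CV0 pY W) `<=` CV0 pZ U ->
  CV0 pZ U =
    CV0 pZ U `&` lc_closure (CV0_index U) (CV0_seminorm pZ)
                   (fun_tensor_span tens (CV0 pX V) (CV0 pY W)).
Proof.
move=> _ crI _ crJ hpX _ hpY _ [btens _] hpZ _ _ _ _ nU hyp1 hyp2.
rewrite eqEsubset; split; last by move=> F0 [] h _.
move=> F0 hF0; split => //.
move=> n k kU e e0.
pose u j := (k j).1; pose r j := (k j).2.
have [hUsc _ _] := nU.
have u0 j w : 0 <= u j w by case: (hUsc _ (kU j)) => _; apply.
have uusc j : upper_semicont (u j) by case: (hUsc _ (kU j)).
set span := fun_tensor_span tens (CV0 pX V) (CV0 pY W).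
have e4 : 0 < e / 4 by rewrite divr_gt0.
have stepA : forall z : I * J, exists h, span h /\
   exists AB : set I * set J, [/\ nbhs z.1 AB.1, nbhs z.2 AB.2 &
     forall x y, AB.1 x -> AB.2 y -> forall j,
       u j (x, y) * pZ (r j) (F0 (x, y) - h (x, y)) < e / 4].
  case=> t s /=.
  pose S := \sum_(j < n) u j (t, s).
  have S1 : 0 < S + 1 by rewrite ltr_wpDl // sumr_ge0.
  have uS j : u j (t, s) <= S.
    by rewrite /S (bigD1 j) //= lerDl sumr_ge0.
  have inC : lc_closure setT pZ (evals (CV0 pZ U) (t, s)) (F0 (t, s)).
    move=> m kk _ eps eps0; exists (F0 (t, s)); first by exists F0.
    by move=> j; rewrite subrr (sn0 (hpZ _)).
  rewrite -hyp1 in inC.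
  have eps0 : 0 < e / 8 / (S + 1) by rewrite !divr_gt0.
  have [a [m [c [xs [ys [hxy ->]]]]] hcl] := inC n r (fun _ => Logic.I) _ eps0.
  have : forall kk, exists f, CV0 pX V f /\ f t = xs kk.
    by move=> kk; have [[f ? ?] _] := hxy kk; exists f.
  case/choice => ff hff.
  have : forall kk, exists g, CV0 pY W g /\ g s = ys kk.
    by move=> kk; have [_ [g ? ?]] := hxy kk; exists g.
  case/choice => gg hgg.
  pose h := fun ts : I * J => \sum_(kk < m) c kk *: tens (ff kk ts.1) (gg kk ts.2).
  have hspan : span h.
    exists m, c, ff, gg; split => // kk; split; [exact: (hff kk).1 | exact: (hgg kk).1].
  have hts : h (t, s) = \sum_(kk < m) c kk *: tens (xs kk) (ys kk).
    by apply: eq_bigr => kk _ /=; rewrite (hff kk).2 (hgg kk).2.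
  exists h; split => //.
  have hcont := (hyp2 _ hspan).1.
  have d0 : 0 < e / 16 / (S + 1) by rewrite !divr_gt0.
  have N : \forall w \near (t, s), forall j,
      u j w * pZ (r j) (F0 w - h w) < e / 4.
    apply: (@filter_forall _ _ _ _ (nbhs_filter (t, s))) => j.
    have N1 := uusc j (t, s) 1 ltr01.
    have N2 := hF0.1 (t, s) (r j) _ d0.
    have N3 := hcont (t, s) (r j) _ d0.
    apply: filterS2 (filterI N1 N2) N3 => w [w1 w2] w3.
    have hq := hpZ (r j).
    have hc := hcl j; rewrite -hts in hc.
    have P : pZ (r j) (F0 w - h w) < e / 4 / (S + 1).
      apply: le_lt_trans (snT hq _ (F0 (t, s)) _) _.
      apply: le_lt_trans (lerD (lexx _) (snT hq _ (h (t, s)) _)) _.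
      rewrite -[X in _ + (_ + X)](snN hq) opprB.
      have -> : e / 4 / (S + 1) = e / 16 / (S + 1) + (e / 8 / (S + 1) + e / 16 / (S + 1)).
        by field; rewrite lt0r_neq0.
      by rewrite ltrD // ltrD.
    have uw : u j w <= S + 1 by apply: le_trans (ltW w1) _; rewrite lerD2r.
    apply: le_lt_trans (_ : u j w * pZ (r j) (F0 w - h w) <= (S + 1) * pZ (r j) (F0 w - h w)) _.
      by apply: ler_wpM2r => //; apply: sn_ge0.
    by rewrite -ltr_pdivlMl // mulrC.
  case: N => -[A B] /= [nA nB] sub.
  exists (A, B); split => // x y Ax By j.
  exact: (sub (x, y)).
case/choice: stepA => hh hhP.
have Hh z : span (hh z) by case: (hhP z).
have : forall z, exists AB : set I * set J, [/\ nbhs z.1 AB.1, nbhs z.2 AB.2 &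
     forall x y, AB.1 x -> AB.2 y -> forall j,
       u j (x, y) * pZ (r j) (F0 (x, y) - hh z (x, y)) < e / 4].
  by move=> z; case: (hhP z).
case/choice => AB hAB.
have e2 : 0 < e / 2 by rewrite divr_gt0.
pose Kj j := closure [set w | e / 2 <= pZ (r j) (real_complex R (u j w) *: F0 w)].
have cKj j : compact (Kj j) by exact: (hF0.2 (u j) (kU j) (r j) (e / 2) e2).
pose K1 := \big[setU/set0]_(j <- enum 'I_n) (fst @` Kj j).
pose K2 := \big[setU/set0]_(j <- enum 'I_n) (snd @` Kj j).
have cK1 : compact K1.
  apply: compact_bigU => j; apply: continuous_compact (cKj j).
  by apply: continuous_subspaceT => z; exact: cvg_fst.
have cK2 : compact K2.
  apply: compact_bigU => j; apply: continuous_compact (cKj j).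
  by apply: continuous_subspaceT => z; exact: cvg_snd.
have hK j w : Kj j w -> K1 w.1 /\ K2 w.2.
  move=> Kw; split; apply/mem_bigU; exists j; rewrite ?mem_enum //; by exists w.
have tube : forall t, exists sb : seq J * (J -> J -> R),
  [/\ (forall y, continuous (sb.2 y) /\ forall x, 0 <= sb.2 y x),
     (forall y x, y \in sb.1 -> sb.2 y x <= 1),
     (forall x, \sum_(y <- sb.1) sb.2 y x <= 1),
     (forall x, K2 x -> \sum_(y <- sb.1) sb.2 y x = 1) &
     (forall y x, y \in sb.1 -> 0 < sb.2 y x -> (AB (t, y)).2 x)].
  move=> t.
  have [sl [b hb]] := @pou R J K2 (fun y => (AB (t, y)).2) crJ cK2
    (fun y _ => let: And3 _ h _ := hAB (t, y) in h).
  by exists (sl, b).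
case/choice: tube => sb hsb.
pose At t := [set x | forall y, y \in (sb t).1 -> (AB (t, y)).1 x].
have nAt t : nbhs t (At t).
  by apply: nbhs_seqI => y _; case: (hAB (t, y)).
have [tt [al [alc al1 alS alK alP]]] :=
  @pou R I K1 At crI cK1 (fun t _ => nAt t).
pose ps := [seq (t, y) | t <- tt, y <- (sb t).1].
pose rho (q : I * J) (w : I * J) := al q.1 w.1 * (sb q.1).2 q.2 w.2.
pose a := fun w => \sum_(q <- ps) real_complex R (rho q w) *: hh q w.
have aspan : span a.
  apply: span_sum => q /allpairsPdep [t [y [tin yin ->]]].
  have [hb1 hb2 _ _ _] := hsb t.
  apply: spanZ => //.
  - move=> f hf; apply: (@CV0_scale R I X iX pX hpX (al t) (alc t).1) => //.
    by move=> x; rewrite (alc t).2 al1.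
  - move=> g hg; apply: (@CV0_scale R J Y iY pY hpY ((sb t).2 y) (hb1 y).1) => //.
    by move=> x; rewrite (hb1 y).2 hb2.
  - exact: Hh.
exists a => //.
move=> j.
rewrite /CV0_seminorm /weighted_sup.
have hq := hpZ (r j).
have rho0 q w : 0 <= rho q w.
  have [hb1 _ _ _ _] := hsb q.1.
  exact: mulr_ge0 ((alc _).2 _) ((hb1 _).2 _).
have bound : forall w, u j w * pZ (r j) (F0 w - a w) <= e / 2.
  case=> x y.
  have Seq : \sum_(q <- ps) rho q (x, y) =
      \sum_(t <- tt) al t x * \sum_(y' <- (sb t).1) (sb t).2 y' y.
    by rewrite big_allpairs_dep /=; apply: eq_bigr => t _; rewrite mulr_sumr.
  have S1 : \sum_(q <- ps) rho q (x, y) <= 1.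
    rewrite Seq; apply: le_trans (alS x); apply: ler_sum => t _.
    rewrite -[X in _ <= X]mulr1; apply: ler_wpM2l; first exact: (alc t).2.
    by case: (hsb t).
  have Hq : forall q, q \in ps -> 0 < rho q (x, y) ->
      u j (x, y) * pZ (r j) (F0 (x, y) - hh q (x, y)) <= e / 4.
    move=> q /allpairsPdep [t [y' [tin yin ->]]] rp.
    have [hb1 _ _ _ hb5] := hsb t.
    rewrite /rho /= in rp.
    have a0 := (alc t).2 x; have b0 := (hb1 y').2 y.
    have ap : 0 < al t x.
      by rewrite lt_def a0 andbT; apply/eqP => h; rewrite h mul0r ltxx in rp.
    have bp : 0 < (sb t).2 y' y.
      by rewrite lt_def b0 andbT; apply/eqP => h; rewrite h mulr0 ltxx in rp.
    have Ax := alP t x tin ap y' yin.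
    have By := hb5 y' y yin bp.
    by case: (hAB (t, y')) => _ _ /(_ x y Ax By j) /ltW.
  have hb := @approx_bound R Z (pZ (r j)) hq _ ps (fun q => rho q (x, y))
    (fun q => hh q (x, y)) (F0 (x, y)) (u j (x, y)) (e / 4) (u0 j (x, y))
    (fun q => rho0 q (x, y)) S1 Hq.
  apply: le_trans hb _.
  have S0 : 0 <= \sum_(q <- ps) rho q (x, y) by apply: sumr_ge0.
  case: (pselect (K1 x /\ K2 y)) => [[k1 k2]|nK].
    have inner1 t : \sum_(y' <- (sb t).1) (sb t).2 y' y = 1.
      by case: (hsb t) => _ _ _ h4 _; exact: h4 y k2.
    have -> : \sum_(q <- ps) rho q (x, y) = 1.
      by rewrite Seq (eq_bigr (fun t => al t x)) ?alK // => t _; rewrite inner1 mulr1.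
    rewrite subrr mul0r add0r mul1r; lra.
  have nKj : ~ Kj j (x, y) by move=> /(hK j) /= [] k1 k2; apply: nK.
  have lt : u j (x, y) * pZ (r j) (F0 (x, y)) < e / 2.
    rewrite -(snZp hq _ _ (u0 j (x, y))) ltNge; apply/negP => h.
    by apply: nKj; apply: subset_closure; exact: h.
  nra.
apply: (@le_lt_trans _ _ (e / 2)); last lra.
case: (pselect ([set (k j).1 x * pZ (k j).2 ((F0 - a) x) | x in [set: I * J]] !=set0)).
  move=> ne; apply: ge_sup ne _ => _ [w _ <-]; exact: bound w.
move=> /set0P /negP /negbNE /eqP ->; rewrite sup0; lra.
Qed.
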